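(* Let $\boldsymbol\lambda,\boldsymbol\mu\in\Pi^l_m$ and $\lambda,\mu\in\Pi$ with $\boldsymbol\lambda\leftrightarrow\lambda$, $\boldsymbol\mu\leftrightarrow\mu$, and assume $|\lambda|=|\mu|=r$. Then $(\boldsymbol\lambda,\boldsymbol\mu)$ satisfies (J1) or (J2) if and only if $\#(B(\lambda)\cap B(\mu))=r-2$.
   Context: Fix $n,l,m\ge1$ and $\mathbf s_l=(s_1,\dots,s_l)\in\mathbb Z^l$, $s=s_1+\dots+s_l$. Partitions are identified with Young diagrams; $\Pi$ is the set of partitions, $\Pi^l_m$ the set of $l$-tuples $\boldsymbol\lambda=(\lambda^{(1)},\dots,\lambda^{(l)})$ of partitions of total size $m$. A ribbon is a nonempty connected skew diagram containing no $2\times2$ square. For $\lambda$ with $|\lambda|=r$, $B(\lambda)=\{\lambda_i+s+1-i:1\le i\le r\}$. Each $k\in\mathbb Z$ is uniquely $k=c(k)+n(d(k)-1)+nl\,m(k)$ with $c(k)\in\{1,\dots,n\}$, $d(k)\in\{1,\dots,l\}$; $\phi(k)=c(k)+n\,m(k)$. $\boldsymbol\lambda\leftrightarrow\lambda$ iff $\{(\lambda^{(b)}_i+s_b+1-i,b):i\ge1,b\}=\{(\phi(k),d(k)):k\in\{\lambda_i+s+1-i:i\ge1\}\}$. Conditions: (J1) $\boldsymbol\lambda\neq\boldsymbol\mu$ and there are $d\ne d'$ with $\mu^{(d)}\subset\lambda^{(d)}$, $\lambda^{(d')}\subset\mu^{(d')}$, $\lambda^{(b)}=\mu^{(b)}$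 for $b\notin\{d,d'\}$, and $\lambda^{(d)}/\mu^{(d)}$ and $\mu^{(d')}/\lambda^{(d')}$ are ribbons of the same length. (J2) $\boldsymbol\lambda\ne\boldsymbol\mu$ and there is $d$ with $\lambda^{(b)}=\mu^{(b)}$ for $b\ne d$, and $\lambda^{(d)}/(\lambda^{(d)}\cap\mu^{(d)})$, $\mu^{(d)}/(\lambda^{(d)}\cap\mu^{(d)})$ are ribbons of the same length. *)

(* Defs.v *)
From mathcomp Require Import all_boot all_order all_algebra.
Set Implicit Arguments. Unset Strict Implicit. Unset Printing Implicit Defensive.
Import Order.TTheory GRing.Theory Num.Theory.
Local Open Scope ring_scope.

(* A partition is a weakly decreasing list of positive naturals;
   lambda_i (i >= 1) is [nth 0 la (i-1)], which is 0 beyond the length. *)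
Definition is_partition (la : seq nat) : bool :=
  sorted geq la && all (fun x => 0 < x)%N la.

(* An l-tuple of partitions (components indexed by 'I_l, b <-> b+1)
   of total size m. *)
Definition is_multipartition (l m : nat) (bla : {ffun 'I_l -> seq nat}) : Prop :=
  (forall b, is_partition (bla b)) /\ (\sum_(b < l) sumn (bla b))%N = m.

Definition psub (mu la : seq nat) : Prop := forall i, (nth 0 mu i <= nth 0 la i)%N.

Definition pmeet (la mu : seq nat) : seq nat :=
  mkseq (fun i => minn (nth 0 la i) (nth 0 mu i)) (minn (size la) (size mu)).

(* cells (i, j), 0-indexed, of the skew diagram la / mu *)
Definition in_skew (la mu : seq nat) (c : nat * nat) : bool :=
  (nth 0 mu c.1 <= c.2 < nth 0 la c.1)%N.

(* number of cells of la / mu (for mu ⊆ la) *)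
Definition skew_size (la mu : seq nat) : nat :=
  (\sum_(i < size la) (nth 0 la i - nth 0 mu i))%N.

Definition cell_adj (c d : nat * nat) : bool :=
  ((maxn c.1 d.1 - minn c.1 d.1) + (maxn c.2 d.2 - minn c.2 d.2) == 1)%N.

Definition skew_connected (la mu : seq nat) : Prop :=
  forall a b, in_skew la mu a -> in_skew la mu b ->
    exists p : seq (nat * nat),
      [/\ path cell_adj a p, all (in_skew la mu) p & last a p = b].

Definition ribbon (la mu : seq nat) : Prop :=
  [/\ exists c, in_skew la mu c,
      skew_connected la mu &
      ~ exists i j, [&& in_skew la mu (i, j), in_skew la mu (i.+1, j),
                        in_skew la mu (i, j.+1) & in_skew la mu (i.+1, j.+1)]].

(* k = c(k) + n(d(k)-1) + n l m(k), c in 1..n, d in 1..l *)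
Definition cpart (n l : nat) (k : int) : int := modz (k - 1) n%:Z + 1.
Definition dpart (n l : nat) (k : int) : int := divz (modz (k - 1) (n * l)%N%:Z) n%:Z + 1.
Definition mpart (n l : nat) (k : int) : int := divz (k - 1) (n * l)%N%:Z.
Definition phi (n l : nat) (k : int) : int := cpart n l k + n%:Z * mpart n l k.

Definition corr (n l : nat) (sl : 'I_l -> int) (bla : {ffun 'I_l -> seq nat})
    (la : seq nat) : Prop :=
  forall (x : int) (b : 'I_l),
    (exists i : nat, x = (nth 0%N (bla b) i)%:Z + sl b + 1 - (i.+1)%:Z) <->
    (exists i : nat,
       let k := (nth 0%N la i)%:Z + (\sum_(b' < l) sl b') + 1 - (i.+1)%:Z in
       phi n l k = x /\ dpart n l k = (nat_of_ord b).+1%:Z).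

Definition Bset (s : int) (la : seq nat) : seq int :=
  [seq (nth 0%N la i.-1)%:Z + s + 1 - i%:Z | i <- iota 1 (sumn la)].

Definition J1 (l : nat) (bla bmu : {ffun 'I_l -> seq nat}) : Prop :=
  bla <> bmu /\
  exists d d' : 'I_l, [/\ d <> d', psub (bmu d) (bla d), psub (bla d') (bmu d'),
    (forall b, b <> d -> b <> d' -> bla b = bmu b) &
    [/\ ribbon (bla d) (bmu d), ribbon (bmu d') (bla d') &
    skew_size (bla d) (bmu d) = skew_size (bmu d') (bla d')]].

Definition J2 (l : nat) (bla bmu : {ffun 'I_l -> seq nat}) : Prop :=
  bla <> bmu /\
  exists d : 'I_l, [/\ (forall b, b <> d -> bla b = bmu b),
    ribbon (bla d) (pmeet (bla d) (bmu d)), ribbon (bmu d) (pmeet (bla d) (bmu d)) &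
    skew_size (bla d) (pmeet (bla d) (bmu d)) = skew_size (bmu d) (pmeet (bla d) (bmu d))].

(* Main.v *)
Require Import Defs.
From mathcomp Require Import all_boot all_order all_algebra.
From mathcomp Require Import zify ring lra.
From Stdlib Require Import Classical.
Import Order.TTheory GRing.Theory Num.Theory.
Local Open Scope ring_scope.
Lemma modz_modM (u : int) (n l : nat) : (0 < n)%N -> (0 < l)%N ->
  modz (modz u (n * l)%N%:Z) n%:Z = modz u n%:Z.
Proof.
move=> n0 l0.
rewrite {2}(divz_eq u (n * l)%N%:Z).
have -> : (u %/ (n * l)%N%:Z)%Z * (n * l)%N%:Z = ((u %/ (n * l)%N%:Z)%Z * l%:Z) * n%:Z.
  by rewrite PoszM; ring.
by rewrite modzMDl.
Qed.

Lemma psi_eq (n l : nat) (k : int) : (0 < n)%N -> (0 < l)%N ->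
  let x := phi n l k - 1 in
  k = modz x n%:Z + 1 + n%:Z * (dpart n l k - 1) + (n * l)%N%:Z * divz x n%:Z.
Proof.
move=> n0 l0 /=.
have nz : n%:Z != 0 by lia.
rewrite /phi /cpart /mpart /dpart.
set u := k - 1.
have e1 : modz u n%:Z + 1 + n%:Z * divz u (n * l)%N%:Z - 1
   = divz u (n * l)%N%:Z * n%:Z + modz u n%:Z by ring.
rewrite e1 modzMDl divzMDl // [X in (X * _)%R]/= .
have h0 : 0 <= modz u n%:Z by apply: modz_ge0.
have h1 : modz u n%:Z < n%:Z by apply: ltz_pmod; lia.
rewrite (modz_small (m:=modz u n%:Z)) ?h0 ?h1 //.
rewrite (divz_small (m:=modz u n%:Z)); last by apply/andP; split; lia.
rewrite addr0.
have e2 := divz_eq (modz u (n * l)%N%:Z) n%:Z.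
rewrite modz_modM // in e2.
have e3 := divz_eq u (n * l)%N%:Z.
rewrite /u in e3 e2 *.
apply/eqP; rewrite -subr_eq0; apply/eqP.
set A := divz (k-1) (n * l)%N%:Z in e3 *.
set B := modz (k-1) (n * l)%N%:Z in e2 e3 *.
set C := modz (k-1) n%:Z in e2 *.
set D := divz B n%:Z in e2 *.
have : k = A * (n * l)%N%:Z + B + 1 by rewrite -e3; ring.
move=> ->. rewrite e2. ring.
Qed.

Lemma psi_inj (n l : nat) (k k' : int) : (0 < n)%N -> (0 < l)%N ->
  phi n l k = phi n l k' -> dpart n l k = dpart n l k' -> k = k'.
Proof.
move=> n0 l0 e1 e2; rewrite (psi_eq n l k n0 l0) (psi_eq n l k' n0 l0) /=.
by rewrite e1 e2.
Qed.

Lemma dpart_range (n l : nat) (k : int) : (0 < n)%N -> (0 < l)%N ->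
  exists b : 'I_l, dpart n l k = (nat_of_ord b).+1%:Z.
Proof.
move=> n0 l0.
have nlpos : 0 < (n * l)%N%:Z by lia.
have h0 : 0 <= modz (k-1) (n * l)%N%:Z by apply: modz_ge0; rewrite gt_eqF.
have h1 : modz (k-1) (n * l)%N%:Z < (n * l)%N%:Z by apply: ltz_pmod.
set B := modz (k-1) (n * l)%N%:Z in h0 h1.
have d0 : 0 <= divz B n%:Z by rewrite divz_ge0 //; lia.
have d1 : divz B n%:Z < l%:Z by rewrite ltz_divLR; lia.
have [d dE] : exists d : nat, divz B n%:Z = d%:Z.
  by exists `|divz B n%:Z|%N; rewrite gez0_abs.
rewrite dE in d1; have {}d1 : (d < l)%N by lia.
exists (Ordinal d1) => /=.
by rewrite /dpart -/B dE -addn1 PoszD.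
Qed.

Set Implicit Arguments. Unset Strict Implicit.
Definition bv (p : seq nat) (t : int) (i : nat) : int :=
  (nth 0%N p i)%:Z + t + 1 - (i.+1)%:Z.
Definition beta (p : seq nat) (t : int) (w : int) : Prop := exists i : nat, w = bv p t i.
Definition Bn (p : seq nat) (t : int) (N : nat) : seq int := map (bv p t) (iota 0 N).
Definition Dl (p q : seq nat) (t : int) (N : nat) : seq int :=
  [seq w <- Bn p t N | w \notin Bn q t N].

Lemma part_anti (p : seq nat) i j : is_partition p -> (i <= j)%N -> (nth 0%N p j <= nth 0%N p i)%N.
Proof.
case/andP=> so _ ij.
case: (ltnP j (size p)) => hj; last by rewrite nth_default.
have hi : (i < size p)%N by apply: leq_ltn_trans hj.
have := @sorted_leq_nth _ geq _ _ 0%N p so i j; rewrite !inE => H.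
by apply: H => //; [move=> a b c /= h1 h2; apply: leq_trans h2 h1 | move=> a /=].
Qed.

Lemma part_size (p : seq nat) : is_partition p -> (size p <= sumn p)%N.
Proof.
case/andP=> _; elim: p => //= a p IH /andP[a0 ap].
by have := IH ap; lia.
Qed.

Lemma bv_lt (p : seq nat) t i j : is_partition p -> (i < j)%N -> bv p t j < bv p t i.
Proof.
move=> pp ij; have := part_anti pp (ltnW ij); rewrite /bv; lia.
Qed.

Lemma bv_inj (p : seq nat) t i j : is_partition p -> bv p t i = bv p t j -> i = j.
Proof.
move=> pp e; case: (ltngtP i j) => // h.
- by have := bv_lt t pp h; rewrite e ltxx.
- by have := bv_lt t pp h; rewrite e ltxx.
Qed.

Lemma bv_big (p : seq nat) t i : (size p <= i)%N -> bv p t i = t - i%:Z.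
Proof. by move=> h; rewrite /bv nth_default //; lia. Qed.

Lemma Bn_uniq p t N : is_partition p -> uniq (Bn p t N).
Proof.
move=> pp; rewrite map_inj_in_uniq ?iota_uniq // => i j _ _; exact: bv_inj.
Qed.

Lemma beta_low p t N w : (size p <= N)%N -> w <= t - N%:Z -> beta p t w.
Proof.
move=> sN hw; exists `|t - w|%N.
have e : (`|t - w|%N)%:Z = t - w by rewrite gez0_abs; lia.
rewrite bv_big; first by rewrite e; ring.
lia.
Qed.

Lemma mem_Bn p t N w : is_partition p -> (size p <= N)%N ->
  (w \in Bn p t N) <-> (beta p t w /\ t - N%:Z < w).
Proof.
move=> pp sN; split.
- case/mapP=> i; rewrite mem_iota add0n => /andP[_ iN] ->; split; first by exists i.
  have := part_anti pp (leq0n i); rewrite /bv. lia.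
- case=> [[i ->]] h; apply/mapP; exists i => //; rewrite mem_iota add0n leq0n /=.
  case: (ltnP i N) => // iN; exfalso.
  move: h; rewrite bv_big; first lia.
  exact: leq_trans sN iN.
Qed.

Lemma mem_Dl p q t N w : is_partition p -> is_partition q ->
  (size p <= N)%N -> (size q <= N)%N ->
  (w \in Dl p q t N) <-> (beta p t w /\ ~ beta q t w).
Proof.
move=> pp qq sp sq; rewrite mem_filter; split.
- case/andP=> h1 h2; have [bp lo] := (mem_Bn t w pp sp).1 h2; split=> // bq.
  by move/negP: h1; apply; apply/(mem_Bn t w qq sq).
- case=> bp nbq.
  have lo : t - N%:Z < w.
    case: (ltrP (t - N%:Z) w) => // h; exfalso; apply: nbq; exact: beta_low sq h.
  apply/andP; split; last by apply/(mem_Bn t w pp sp).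
  apply/negP => /(mem_Bn t w qq sq) [] //.
Qed.

Lemma Dl_uniq p q t N : is_partition p -> uniq (Dl p q t N).
Proof. by move=> pp; rewrite filter_uniq // Bn_uniq. Qed.
Lemma Dl_common_perm p q t N : is_partition p -> is_partition q ->
  perm_eq [seq w <- Bn p t N | w \in Bn q t N] [seq w <- Bn q t N | w \in Bn p t N].
Proof.
move=> pp qq; apply: uniq_perm; rewrite ?filter_uniq ?Bn_uniq //.
by move=> w; rewrite !mem_filter andbC.
Qed.

Lemma size_Dl p q t N : size (Dl p q t N) = (N - size [seq w <- Bn p t N | w \in Bn q t N])%N.
Proof.
rewrite /Dl !size_filter.
have := count_predC (fun w => w \in Bn q t N) (Bn p t N).
rewrite {2}/Bn size_map size_iota => h.
by rewrite -[X in (_ = X - _)%N]h addKn.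
Qed.

Lemma Dl_sym p q t N : is_partition p -> is_partition q ->
  size (Dl p q t N) = size (Dl q p t N).
Proof.
move=> pp qq; rewrite !size_Dl; congr (_ - _)%N; exact: perm_size (Dl_common_perm t N pp qq).
Qed.

Lemma sumn_iota p N : (size p <= N)%N -> sumn p = (\sum_(i <- iota 0 N) nth 0%N p i)%N.
Proof.
move=> sN; rewrite sumnE (big_nth 0%N) -/(index_iota 0 (size p)).
have -> : iota 0 N = iota 0 (size p) ++ iota (0 + size p) (N - size p) by rewrite -iotaD subnKC.
rewrite big_cat /= /index_iota subn0.
rewrite [X in (_ + X)%N]big1_seq ?addn0 //.
by move=> i /andP[_]; rewrite mem_iota => /andP[h _]; rewrite nth_default.
Qed.

Lemma sum_Bn p t N : (size p <= N)%N ->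
  \sum_(w <- Bn p t N) w = (sumn p)%:Z + \sum_(i <- iota 0 N) (t + 1 - (i.+1)%:Z).
Proof.
move=> sN; rewrite big_map (sumn_iota sN).
have -> : ((\sum_(i <- iota 0 N) nth 0%N p i)%N)%:Z = \sum_(i <- iota 0 N) (nth 0%N p i)%:Z.
  by rewrite -(big_morph Posz PoszD (erefl 0%:Z)).
rewrite -big_split /=; apply: eq_bigr => i _; rewrite /bv; ring.
Qed.

Lemma Dl_sum p q t N : is_partition p -> is_partition q ->
  (size p <= N)%N -> (size q <= N)%N ->
  (sumn p)%:Z - (sumn q)%:Z = \sum_(w <- Dl p q t N) w - \sum_(w <- Dl q p t N) w.
Proof.
move=> pp qq sp sq.
have e : forall a b, \sum_(w <- Bn a t N) w =
   \sum_(w <- Bn a t N | w \in Bn b t N) w + \sum_(w <- Dl a b t N) w.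
  by move=> a b; rewrite /Dl big_filter [LHS](bigID (fun w => w \in Bn b t N)) /=.
have h1 := e p q; have h2 := e q p.
rewrite (sum_Bn _ sp) in h1; rewrite (sum_Bn _ sq) in h2.
have hc : \sum_(w <- Bn p t N | w \in Bn q t N) w = \sum_(w <- Bn q t N | w \in Bn p t N) w.
  by rewrite -[LHS]big_filter -[RHS]big_filter; apply: perm_big; apply: Dl_common_perm.
rewrite hc in h1.
move: h1 h2.
set A := \sum_(i <- iota 0 N) _. set B := \sum_(w <- Bn q t N | _) _.
set C := \sum_(w <- Dl p q t N) _. set D := \sum_(w <- Dl q p t N) _.
move=> h1 h2.
have -> : C = (sumn p)%:Z + A - B by rewrite h1; ring.
have -> : D = (sumn q)%:Z + A - B by rewrite h2; ring.
ring.
Qed.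
Lemma part_eq (p q : seq nat) : is_partition p -> is_partition q ->
  (forall i, nth 0%N p i = nth 0%N q i) -> p = q.
Proof.
move=> /andP[_ pp] /andP[_ qq] e.
have hs : size p = size q.
  apply/eqP; rewrite eqn_leq; apply/andP; split; rewrite leqNgt; apply/negP => h.
  - have := e (size q); rewrite (nth_default _ (leqnn _)) => e1.
    move/allP: pp => /(_ (nth 0%N p (size q)) (mem_nth _ h)); rewrite e1 //.
  - have := e (size p); rewrite (nth_default _ (leqnn _)) => e1.
    move/allP: qq => /(_ (nth 0%N q (size p)) (mem_nth _ h)); rewrite -e1 //.
by apply: (eq_from_nth (x0 := 0%N) hs) => i _; apply: e.
Qed.

Lemma sdr (u v : nat -> int) :
  (forall i j, (i < j)%N -> u j < u i) -> (forall i j, (i < j)%N -> v j < v i) ->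
  (forall w, (exists i, w = u i) <-> (exists i, w = v i)) -> forall i, u i = v i.
Proof.
move=> hu hv huv i; elim/ltn_ind: i => i IH.
have [j ej] := (huv (u i)).1 (ex_intro _ i erefl).
have [j' ej'] := (huv (v i)).2 (ex_intro _ i erefl).
have h1 : (i <= j)%N.
  rewrite leqNgt; apply/negP => ji; have := hu _ _ ji; rewrite ej -(IH _ ji) ltxx //.
have h2 : (i <= j')%N.
  rewrite leqNgt; apply/negP => ji; have := hv _ _ ji; rewrite ej' (IH _ ji) ltxx //.
have l1 : u i <= v i.
  rewrite ej; move: h1; rewrite leq_eqVlt => /orP[/eqP->|/hv/ltW] //.
have l2 : v i <= u i.
  rewrite ej'; move: h2; rewrite leq_eqVlt => /orP[/eqP->|/hu/ltW] //.
by apply/eqP; rewrite eq_le l1 l2.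
Qed.

Lemma beta_part_eq (p q : seq nat) t : is_partition p -> is_partition q ->
  (forall w, beta p t w <-> beta q t w) -> p = q.
Proof.
move=> pp qq e; apply: part_eq => // i.
have := @sdr (bv p t) (bv q t) (fun i j h => bv_lt t pp h) (fun i j h => bv_lt t qq h) e i.
rewrite /bv => h; apply/eqP; rewrite -(eqr_nat int); apply/eqP; lia.
Qed.

Definition Move (p q : seq nat) t x y :=
  [/\ beta p t x, ~ beta p t y & forall z, beta q t z <-> ((beta p t z /\ z <> x) \/ z = y)].

Lemma Dl_nil p q t N : is_partition p -> is_partition q ->
  (size p <= N)%N -> (size q <= N)%N -> size (Dl p q t N) = 0%N -> p = q.
Proof.
move=> pp qq sp sq h0; have h1 := h0; rewrite (Dl_sym t N pp qq) in h1.
move/size0nil: h0 => h0; move/size0nil: h1 => h1.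
apply: (@beta_part_eq p q t pp qq) => w; split=> bw.
- apply: NNPP => nb; have := (mem_Dl t w pp qq sp sq).2 (conj bw nb); rewrite h0 //.
- apply: NNPP => nb; have := (mem_Dl t w qq pp sq sp).2 (conj bw nb); rewrite h1 //.
Qed.

Lemma size1 (s : seq int) : size s = 1%N -> s = [:: head 0 s].
Proof. by case: s => // a [|]. Qed.

Lemma Dl_one p q t N : is_partition p -> is_partition q ->
  (size p <= N)%N -> (size q <= N)%N -> size (Dl p q t N) = 1%N ->
  exists x y, [/\ Dl p q t N = [:: x], Dl q p t N = [:: y] & Move p q t x y].
Proof.
move=> pp qq sp sq h1; have h2 := h1; rewrite (Dl_sym t N pp qq) in h2.
move/size1: h1 => h1; move/size1: h2 => h2.
set x := head 0 (Dl p q t N) in h1; set y := head 0 (Dl q p t N) in h2.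
have mx : forall w, (beta p t w /\ ~ beta q t w) <-> w = x.
  by move=> w; rewrite -(mem_Dl t w pp qq sp sq) h1 inE; split => [/eqP|->].
have my : forall w, (beta q t w /\ ~ beta p t w) <-> w = y.
  by move=> w; rewrite -(mem_Dl t w qq pp sq sp) h2 inE; split => [/eqP|->].
exists x, y; split => //; split.
- by case: ((mx x).2 erefl).
- by case: ((my y).2 erefl).
- move=> z; split.
  + move=> bq; case: (classic (beta p t z)) => bp.
    * left; split => // zx; case: ((mx z).2 zx) => _; apply; done.
    * by right; apply/(my z).
  + case=> [[bp zx]|->]; last by case: ((my y).2 erefl).
    apply: NNPP => nb; exact: zx ((mx z).1 (conj bp nb)).
Qed.

Lemma Move_sym p q t x y : Move p q t x y -> Move q p t y x.
Proof.
case=> bx ny e; have xy : x <> y by move=> exy; apply: ny; rewrite -exy.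
split.
- by apply/e; right.
- by move/e => [[_ ]|] //.
- move=> z; split.
  + move=> bp; case: (classic (z = x)) => zx; first by right.
    left; split; first by apply/e; left.
    by move=> zy; apply: ny; rewrite -zy.
  + case=> [[/e [[]|] //]|->] //.
Qed.

Lemma uniq1 (s : seq int) x : uniq s -> (forall w, w \in s <-> w = x) -> s = [:: x].
Proof.
move=> us h; have hp : perm_eq s [:: x].
  apply: uniq_perm => // w; rewrite inE; apply/idP/idP => [/h ->|/eqP ->] //.
  by apply/h.
by have := perm_size hp; case: s us h hp => // a [|] //= _ h _ _; congr [:: _]; apply/h; rewrite inE.
Qed.

Lemma Move_Dl p q t N x y : is_partition p -> is_partition q ->
  (size p <= N)%N -> (size q <= N)%N -> Move p q t x y ->
  Dl p q t N = [:: x] /\ Dl q p t N = [:: y].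
Proof.
move=> pp qq sp sq mv; have mv' := Move_sym mv.
case: mv => bx ny e; case: mv' => by' nx e'.
split; apply: uniq1; rewrite ?Dl_uniq // => w.
- rewrite (mem_Dl t w pp qq sp sq); split.
  + case=> bp nq; apply: NNPP => wx; apply: nq; apply/e; left; done.
  + by move=> ->.
- rewrite (mem_Dl t w qq pp sq sp); split.
  + case=> bq np; apply: NNPP => wy; apply: np; apply/e'; left; done.
  + by move=> ->.
Qed.

Lemma Move_sum p q t x y : is_partition p -> is_partition q -> Move p q t x y ->
  (sumn p)%:Z - (sumn q)%:Z = x - y.
Proof.
move=> pp qq mv.
have sp : (size p <= maxn (size p) (size q))%N by apply: leq_maxl.
have sq : (size q <= maxn (size p) (size q))%N by apply: leq_maxr.
have [e1 e2] := Move_Dl pp qq sp sq mv.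
by rewrite (Dl_sum t pp qq sp sq) e1 e2 !big_seq1.
Qed.
Definition RowChar (p q : seq nat) (a b : nat) :=
  [/\ (a <= b)%N, (forall i, (i < a)%N \/ (b < i)%N -> nth 0%N q i = nth 0%N p i),
      (forall i, (a <= i)%N -> (i < b)%N -> (nth 0%N q i).+1 = nth 0%N p i.+1) &
      (nth 0%N q b < nth 0%N p b)%N].

Lemma RowChar_psub p q a b : is_partition p -> RowChar p q a b -> psub q p.
Proof.
move=> pp [ab e1 e2 e3] i.
case: (ltnP i a) => ia; first by rewrite e1 //; left.
case: (ltngtP i b) => ib.
- have := e2 _ ia ib; have := part_anti pp (leqnSn i); lia.
- by rewrite e1 //; right.
- by rewrite ib; apply: ltnW.
Qed.

Lemma RowChar_Move p q a b t : is_partition p -> is_partition q -> RowChar p q a b ->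
  Move p q t (bv p t a) (bv q t b) /\ bv q t b < bv p t a.
Proof.
move=> pp qq [ab e1 e2 e3].
have out : forall i, (i < a)%N \/ (b < i)%N -> bv q t i = bv p t i.
  by move=> i h; rewrite /bv e1.
have mid : forall i, (a <= i)%N -> (i < b)%N -> bv q t i = bv p t i.+1.
  by move=> i h1 h2; rewrite /bv -(e2 _ h1 h2); lia.
have yb : bv q t b < bv p t b by rewrite /bv; lia.
have yb1 : bv p t b.+1 < bv q t b.
  rewrite -(out b.+1); [exact: bv_lt | by right].
have ba : bv p t b <= bv p t a.
  move: ab; rewrite leq_eqVlt => /orP[/eqP->|h] //; exact/ltW/bv_lt.
split; last by apply: lt_le_trans yb ba.
split.
- by exists a.
- case=> j ej.
  case: (leqP j b) => jb.
  + have : bv p t b <= bv p t j.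
      move: jb; rewrite leq_eqVlt => /orP[/eqP->|h] //; exact/ltW/bv_lt.
    lia.
  + have : bv p t j <= bv p t b.+1.
      move: jb; rewrite leq_eqVlt => /orP[/eqP<-|h] //; exact/ltW/bv_lt.
    lia.
- move=> z; split.
  + case=> i ->.
    case: (ltnP i a) => ia.
    * left; rewrite out; last by left.
      split; first by exists i.
      by move/(bv_inj pp) => h; move: ia; rewrite h ltnn.
    case: (ltngtP i b) => ib.
    * left; rewrite mid //; split; first by exists i.+1.
      by move/(bv_inj pp) => h; move: ia; rewrite -h ltnn.
    * left; rewrite out; last by right.
      split; first by exists i.
      by move/(bv_inj pp) => h; move: ib; rewrite h ltnNge ab.
    * by right; rewrite ib.
  + case=> [[[j ->] ja]|->]; last by exists b.
    case: (ltnP j a) => hja; first by exists j; rewrite out //; left.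
    case: (ltnP b j) => hjb; first by exists j; rewrite out //; right.
    have aj : (a < j)%N.
      rewrite ltn_neqAle hja andbT; apply/eqP => h; apply: ja; rewrite h.
      done.
    exists j.-1; rewrite mid; [by rewrite prednK // (leq_ltn_trans _ aj)| |].
    * by rewrite -ltnS prednK // (leq_ltn_trans _ aj).
    * by rewrite -ltnS prednK ?(leq_ltn_trans _ aj) // ltnS (leq_trans _ hjb).
Qed.

Lemma strict_from_step (u : nat -> int) : (forall i, u i.+1 < u i) ->
  forall i j, (i < j)%N -> u j < u i.
Proof.
move=> h i j; elim: j => // j IH; rewrite ltnS leq_eqVlt => /orP[/eqP->|/IH] //.
by move=> h2; apply: lt_trans (h j) h2.
Qed.

Lemma Move_RowChar p q t x y : is_partition p -> is_partition q ->
  Move p q t x y -> y < x -> exists a b, RowChar p q a b.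
Proof.
move=> pp qq [[a ->] ny e] yx.
set P := fun j => y < bv p t j.
have exP : exists j, P j by exists a.
have bnd : forall j, P j -> (j <= size p + `|t - y|)%N.
  move=> j; rewrite /P; case: (leqP j (size p)) => hj.
  - by move=> _; apply: leq_trans hj (leq_addr _ _).
  - rewrite bv_big ?(ltnW hj) //; lia.
have Pdec : forall j, ~~ P j -> y < bv p t j -> False by move=> j /negP.
case: (ex_maxnP exP bnd) => b Pb maxb.
have ab : (a <= b)%N by apply: maxb.
have Pb1 : bv p t b.+1 < y.
  have h1 : ~~ (y < bv p t b.+1).
    by apply/negP => h; have := maxb _ h; rewrite ltnn.
  have h2 : bv p t b.+1 != y by apply/eqP => h; apply: ny; exists b.+1.
  by move: h1 h2; rewrite -leNgt lt_neqAle => -> ->.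
set h := fun i => if (i < a)%N then bv p t i else if (i < b)%N then bv p t i.+1
                  else if i == b then y else bv p t i.
have st := fun i j (h : (i < j)%N) => bv_lt t pp h.
have hstep : forall i, h i.+1 < h i.
  move=> i; rewrite /h.
  case: (ltnP i.+1 a) => h1.
  - by rewrite (ltn_trans (ltnSn i) h1); apply: st.
  case: (ltnP i a) => h2.
  - have ia : a = i.+1 by apply/eqP; rewrite eqn_leq h1 h2.
    rewrite -ia; case: (ltnP a b) => h3.
    + apply: lt_trans (st _ _ (ltnSn a)) _; rewrite ia; apply: st; done.
    + have -> : a == b by rewrite eqn_leq ab h3.
      apply: lt_trans yx _; rewrite ia; apply: st; done.
  case: (ltnP i.+1 b) => h3.
  - by rewrite (ltn_trans (ltnSn i) h3); apply: st.
  case: (ltnP i b) => h4.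
  - have ib : b = i.+1 by apply/eqP; rewrite eqn_leq h3 h4.
    rewrite -ib eqxx; exact: Pb.
  case: (eqVneq i.+1 b) => h5.
  - by move: h4; rewrite -h5 ltnn.
  case: (eqVneq i b) => h6.
  - by rewrite h6.
  - by apply: st.
have hst := strict_from_step hstep.
have range : forall w, (exists i, w = h i) <-> beta q t w.
  move=> w; rewrite (e w); split.
  - case=> i ->; rewrite /h.
    case: (ltnP i a) => ia.
    + left; split; first by exists i.
      by move/(bv_inj pp) => hh; move: ia; rewrite hh ltnn.
    case: (ltnP i b) => ib.
    + left; split; first by exists i.+1.
      by move/(bv_inj pp) => hh; move: ia; rewrite -hh ltnn.
    case: (eqVneq i b) => ib2; first by right.
    left; split; first by exists i.
    move/(bv_inj pp) => hh; move: ib ib2 ab; rewrite hh; lia.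
  - case=> [[[j ->] ja]|->]; last by exists b; rewrite /h ltnn eqxx; case: ltnP => // hb; move: ab; rewrite leqNgt hb.
    case: (ltnP j a) => hja; first by exists j; rewrite /h hja.
    have aj : (a < j)%N.
      by rewrite ltn_neqAle hja andbT; apply/eqP => hh; apply: ja; rewrite hh.
    case: (leqP j b) => hjb.
    + exists j.-1; rewrite /h prednK ?(leq_ltn_trans _ aj) //.
      by rewrite leqNgt aj /= hjb.
    + exists j; rewrite /h.
      have -> : (j < a)%N = false by apply/negbTE; rewrite -leqNgt ltnW.
      have -> : (j < b)%N = false by apply/negbTE; rewrite -leqNgt ltnW.
      by have -> : (j == b) = false by apply/negbTE; rewrite neq_ltn hjb orbT.
have eq : forall i, bv q t i = h i.
  apply: sdr => [i j hh|i j hh|w]; [exact: bv_lt | exact: hst | ].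
  by split => H; [exact: (range w).2 H | exact: (range w).1 H].
exists a, b; split => //.
- move=> i [ia|bi].
  + have := eq i; rewrite /h ia /bv; lia.
  + have := eq i; rewrite /h.
    have -> : (i < a)%N = false by apply/negbTE; rewrite -leqNgt ltnW // (leq_ltn_trans ab bi).
    have -> : (i < b)%N = false by apply/negbTE; rewrite -leqNgt ltnW.
    have -> : (i == b) = false by apply/negbTE; rewrite neq_ltn bi orbT.
    rewrite /bv; lia.
- move=> i ai ib; have := eq i; rewrite /h ltnNge ai /= ib /bv; lia.
- have := eq b; rewrite /h ltnn eqxx.
  have -> : (b < a)%N = false by apply/negbTE; rewrite -leqNgt.
  move: Pb; rewrite /P /bv; lia.
Qed.
Definition conn (la mu : seq nat) (u v : nat * nat) :=
  exists s : seq (nat * nat), [/\ path cell_adj u s, all (in_skew la mu) s & last u s = v].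

Lemma cell_adj_sym u v : cell_adj u v = cell_adj v u.
Proof. by rewrite /cell_adj maxnC minnC [maxn u.2 _]maxnC [minn u.2 _]minnC. Qed.

Lemma conn_refl la mu u : conn la mu u u.
Proof. by exists [::]. Qed.

Lemma conn_trans la mu u v w : conn la mu u v -> conn la mu v w -> conn la mu u w.
Proof.
case=> s1 [p1 a1 l1] [s2 [p2 a2 l2]]; exists (s1 ++ s2).
by rewrite cat_path all_cat last_cat l1 p1 p2 a1 a2 l2.
Qed.

Lemma conn_step la mu u v : in_skew la mu v -> cell_adj u v -> conn la mu u v.
Proof. by move=> sv a; exists [:: v]; rewrite /= a sv. Qed.

Lemma conn_sym la mu u v : in_skew la mu u -> conn la mu u v -> conn la mu v u.
Proof.
move=> su [s [p a l]]; elim: s u su p a l => [|x s IH] u su /=.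
  by move=> _ _ <-; apply: conn_refl.
move=> /andP[ux p] /andP[sx a] l.
apply: conn_trans (IH x sx p a l) _.
by apply: conn_step => //; rewrite cell_adj_sym.
Qed.

Lemma conn_row la mu i j : (nth 0%N mu i <= j < nth 0%N la i)%N ->
  conn la mu (i, nth 0%N mu i) (i, j).
Proof.
move=> /andP[h1 h2].
suff H : forall k, (nth 0%N mu i + k < nth 0%N la i)%N ->
    conn la mu (i, nth 0%N mu i) (i, (nth 0%N mu i + k)%N).
  by have := H (j - nth 0%N mu i)%N; rewrite subnKC //; apply.
elim=> [|k IH] hk; first by rewrite addn0; apply: conn_refl.
apply: conn_trans (IH _) _; first lia.
apply: conn_step; first by rewrite /in_skew /=; apply/andP; split; lia.
by rewrite /cell_adj /=; apply/eqP; lia.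
Qed.

Lemma RowChar_ribbon p q a b : is_partition p -> is_partition q -> RowChar p q a b ->
  ribbon p q.
Proof.
move=> pp qq [ab e1 e2 e3].
have rowin : forall i, (nth 0%N q i < nth 0%N p i)%N -> (a <= i <= b)%N.
  move=> i h; case: (ltnP i a) => ia; first by move: h; rewrite e1 ?ltnn //; left.
  case: (leqP i b) => ib; first by rewrite ?ia ?ib.
  by move: h; rewrite e1 ?ltnn //; right.
split.
- by exists (b, nth 0%N q b); rewrite /in_skew /= leqnn e3.
- have base : forall i, (a <= i <= b)%N -> conn p q (a, nth 0%N q a) (i, nth 0%N q i).
    suff H : forall k, (a + k <= b)%N -> conn p q (a, nth 0%N q a) ((a + k)%N, nth 0%N q (a + k)).
      by move=> i /andP[ai ib]; have := H (i - a)%N; rewrite (subnKC ai); apply.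
    elim=> [|k IH] hk; first by rewrite addn0; apply: conn_refl.
    have hk' : (a + k < b)%N by rewrite -addnS.
    apply: conn_trans (IH (ltnW hk')) _.
    have hq : (nth 0%N q (a + k)).+1 = nth 0%N p (a + k).+1 by apply: e2 => //; apply: leq_addr.
    have hqa : (nth 0%N q (a + k).+1 <= nth 0%N q (a + k))%N by apply: part_anti.
    have hpa : (nth 0%N p (a + k).+1 <= nth 0%N p (a + k))%N by apply: part_anti.
    apply: (@conn_trans _ _ _ ((a + k).+1, nth 0%N q (a + k))).
      apply: conn_step; last by rewrite /cell_adj /=; apply/eqP; lia.
      by rewrite /in_skew /=; apply/andP; split; lia.
    rewrite addnS; apply: conn_sym.
      by rewrite /in_skew /=; apply/andP; split; lia.
    apply: conn_row; apply/andP; split; lia.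
  move=> u v su sv.
  have [u1 u2] := (u.1, u.2); case: u su => i j su; case: v sv => i' j' sv.
  have ri := rowin i (leq_ltn_trans (andP su).1 (andP su).2).
  have ri' := rowin i' (leq_ltn_trans (andP sv).1 (andP sv).2).
  have sa : in_skew p q (a, nth 0%N q a).
    rewrite /in_skew /= leqnn /=; move: ab; rewrite leq_eqVlt => /orP[/eqP -> //|h].
    have := e2 a (leqnn a) h; have := part_anti pp (leqnSn a); lia.
  apply: (@conn_trans _ _ _ (a, nth 0%N q a)).
    apply: conn_sym => //; apply: conn_trans (base _ ri) _; exact: conn_row.
  apply: conn_trans (base _ ri') _; exact: conn_row.
- case=> i [j /and4P[s1 s2 s3 s4]].
  move: s1 s2 s3 s4; rewrite /in_skew /= => s1 s2 s3 s4.
  have r1 := rowin i (leq_ltn_trans (andP s1).1 (andP s1).2).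
  have r2 := rowin i.+1 (leq_ltn_trans (andP s2).1 (andP s2).2).
  have := e2 i (andP r1).1 (andP r2).2.
  move: s1 s4; lia.
Qed.

Lemma crossing la mu u s i : in_skew la mu u -> path cell_adj u s -> all (in_skew la mu) s ->
  (u.1 <= i)%N -> (i < (last u s).1)%N ->
  exists c, in_skew la mu (i, c) /\ in_skew la mu (i.+1, c).
Proof.
elim: s u => [|x s IH] u su /=; first by move=> _ _ h1 h2; move: h2; rewrite ltnNge h1.
move=> /andP[ux p] /andP[sx a] h1 h2.
case: (leqP x.1 i) => hx; first exact: IH sx p a hx h2.
move: ux; rewrite /cell_adj => /eqP ux.
have e1 : u.1 = i by lia.
have e2 : x.1 = i.+1 by lia.
have e3 : x.2 = u.2 by lia.
exists u.2; split.
- by rewrite -e1; case: (u) su.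
- by rewrite -e2 -e3; case: (x) sx.
Qed.

Lemma ribbon_RowChar p q : is_partition p -> is_partition q -> psub q p -> ribbon p q ->
  exists a b, RowChar p q a b.
Proof.
move=> pp qq sub [[c sc] con no22].
set P := fun i => (nth 0%N q i < nth 0%N p i)%N.
have exP : exists i, P i by exists c.1; rewrite /P; move: sc => /andP[h1 h2]; apply: leq_ltn_trans h1 h2.
have bnd : forall i, P i -> (i <= size p)%N.
  by move=> i; rewrite /P; case: (leqP i (size p)) => // hi; rewrite (@nth_default _ 0%N p i (ltnW hi)) ltn0.
case: (ex_minnP exP) => a Pa mina.
case: (ex_maxnP exP bnd) => b Pb maxb.
have ab : (a <= b)%N by apply: mina.
have sa : in_skew p q (a, nth 0%N q a) by rewrite /in_skew /= leqnn.
have sb : in_skew p q (b, nth 0%N q b) by rewrite /in_skew /= leqnn.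
have [s [ps al ls]] := con _ _ sa sb.
exists a, b; split => //.
- move=> i [ia|bi].
  + apply/eqP; rewrite eqn_leq sub /=; rewrite leqNgt; apply/negP => h.
    by have := mina _ h; rewrite leqNgt ia.
  + apply/eqP; rewrite eqn_leq sub /=; rewrite leqNgt; apply/negP => h.
    by have := maxb _ h; rewrite leqNgt bi.
- move=> i ai ib.
  have hl : (i < (last (a, nth 0%N q a) s).1)%N by rewrite ls.
  have [d [/andP[d1 d2] /andP[d3 d4]]] := crossing sa ps al ai hl.
  have hq : (nth 0%N q i.+1 <= nth 0%N q i)%N by apply: part_anti.
  have hp : (nth 0%N p i.+1 <= nth 0%N p i)%N by apply: part_anti.
  apply/eqP; rewrite eqn_leq; apply/andP; split; first by move: d1 d4 => /= ; lia.
  rewrite leqNgt; apply/negP => h; apply: no22; exists i, (nth 0%N q i).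
  rewrite /in_skew /=; apply/and4P; split; apply/andP; split; move: d1 d4 => /=; lia.
Qed.
Lemma psub_size p q : is_partition q -> psub q p -> (size q <= size p)%N.
Proof.
move=> /andP[_ qq] sub; rewrite leqNgt; apply/negP => h.
have := sub (size p); rewrite (@nth_default _ 0%N p) // leqn0 => /eqP e.
by move/allP: qq => /(_ _ (mem_nth 0%N h)); rewrite e.
Qed.

Lemma skew_sumn p q : is_partition q -> psub q p ->
  (skew_size p q + sumn q)%N = sumn p.
Proof.
move=> qq sub; have sq := psub_size qq sub.
rewrite (sumn_iota (leqnn (size p))) (sumn_iota sq) /skew_size.
rewrite -(big_mkord xpredT (fun i => nth 0%N p i - nth 0%N q i)%N).
rewrite /index_iota subn0 -big_split /=; apply: eq_bigr => i _; rewrite subnK //.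
Qed.

Lemma Move_ribbon p q t x y : is_partition p -> is_partition q -> Move p q t x y -> y < x ->
  [/\ psub q p, ribbon p q & skew_size p q = (sumn p - sumn q)%N].
Proof.
move=> pp qq mv yx; have [a [b rc]] := Move_RowChar pp qq mv yx.
have sub := RowChar_psub pp rc.
split => //; first exact: RowChar_ribbon pp qq rc.
by rewrite -(skew_sumn qq sub) addnK.
Qed.

Lemma ribbon_Move p q t : is_partition p -> is_partition q -> psub q p -> ribbon p q ->
  exists x y, Move p q t x y /\ y < x.
Proof.
move=> pp qq sub rb; have [a [b rc]] := ribbon_RowChar pp qq sub rb.
have [mv lt] := RowChar_Move t pp qq rc; by exists (bv p t a), (bv q t b).
Qed.

Lemma nth_pmeet p q i : nth 0%N (pmeet p q) i = minn (nth 0%N p i) (nth 0%N q i).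
Proof.
rewrite /pmeet; case: (ltnP i (minn (size p) (size q))) => h; first by rewrite nth_mkseq.
rewrite nth_default ?size_mkseq //.
move: h; rewrite geq_min => /orP[h|h]; [by rewrite (@nth_default _ 0%N p i h) min0n | by rewrite (@nth_default _ 0%N q i h) minn0].
Qed.

Lemma pmeet_part p q : is_partition p -> is_partition q -> is_partition (pmeet p q).
Proof.
move=> pp qq; apply/andP; split.
- apply/(sortedP 0%N) => i; rewrite size_mkseq => h.
  rewrite !nth_pmeet /=.
  have := part_anti pp (leqnSn i); have := part_anti qq (leqnSn i); lia.
- apply/allP => z /(nthP 0%N) [i]; rewrite size_mkseq => h <-; rewrite nth_pmeet.
  move: h; rewrite leq_min => /andP[h1 h2].
  move: pp qq => /andP[_ /allP p1] /andP[_ /allP q1].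
  have /= := p1 _ (mem_nth 0%N h1); have /= := q1 _ (mem_nth 0%N h2); lia.
Qed.

Lemma pmeet_sub_l p q : psub (pmeet p q) p.
Proof. by move=> i; rewrite nth_pmeet geq_minl. Qed.
Lemma pmeet_sub_r p q : psub (pmeet p q) q.
Proof. by move=> i; rewrite nth_pmeet geq_minr. Qed.
Lemma pmeetC p q : pmeet p q = pmeet q p.
Proof. by rewrite /pmeet minnC; apply: eq_mkseq => i; rewrite minnC. Qed.

Lemma cnt_dc (P : pred nat) N : (forall i, P i.+1 -> P i) ->
  (count P (iota 0 N) <= N)%N /\ forall i, (i < N)%N -> P i = (i < count P (iota 0 N))%N.
Proof.
move=> dc; elim: N => [|N [IH1 IH2]]; first by split.
rewrite -addn1 iotaD /= count_cat /= add0n addn0.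
case: (boolP (P N)) => hN.
- have all : forall i, (i <= N)%N -> P i.
    have gen : forall k i, P (i + k)%N -> P i.
      elim=> [|k IHk] i; first by rewrite addn0.
      by move=> h; apply: IHk; apply: dc; rewrite -addnS.
    by move=> i hi; apply: (gen (N - i)%N); rewrite subnKC.
  have cN : count P (iota 0 N) = N.
    apply/eqP; rewrite eqn_leq IH1 /=; rewrite leqNgt; apply/negP => h.
    by have := IH2 _ h; rewrite ltnn all // ltnW.
  rewrite cN; split; first lia.
  move=> i hi; have -> : (i < N + 1)%N = true by lia.
  by rewrite all //; lia.
- rewrite addn0; split; first lia.
  move=> i hi; case: (ltnP i N) => h; first exact: IH2.
  have -> : i = N by lia.
  by rewrite (negbTE hN) ltnNge IH1.
Qed.

Lemma cnt_min (P Q : pred nat) N : (forall i, P i.+1 -> P i) -> (forall i, Q i.+1 -> Q i) ->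
  count (fun i => P i && Q i) (iota 0 N) = minn (count P (iota 0 N)) (count Q (iota 0 N)).
Proof.
move=> dP dQ.
have dPQ : forall i, P i.+1 && Q i.+1 -> P i && Q i by move=> i /andP[/dP -> /dQ ->].
have [a1 a2] := cnt_dc N dP; have [b1 b2] := cnt_dc N dQ; have [c1 c2] := cnt_dc N dPQ.
set cp := count P _ in a1 a2 *; set cq := count Q _ in b1 b2 *.
set cpq := count _ _ in c1 c2 *.
have h : forall i, (i < N)%N -> (i < cpq)%N = (i < minn cp cq)%N.
  by move=> i hi; rewrite -c2 // a2 // b2 // leq_min.
apply/eqP; rewrite eqn_leq; apply/andP; split; rewrite leqNgt; apply/negP => hc.
- have hN : (minn cp cq < N)%N by apply: leq_trans hc c1.
  by have := h _ hN; rewrite hc ltnn.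
- have hN : (cpq < N)%N by apply: leq_trans hc (leq_trans (geq_minl _ _) a1).
  by have := h _ hN; rewrite hc ltnn.
Qed.

Definition Cn (X : seq nat) t N (z : int) := count (fun w => z <= w) (Bn X t N).

Lemma Cn_step X t N z : is_partition X -> Cn X t N z = (Cn X t N (z + 1) + (z \in Bn X t N))%N.
Proof.
move=> px; rewrite /Cn -(count_uniq_mem z (Bn_uniq t N px)).
elim: (Bn X t N) => //= w s ->; lia.
Qed.

Lemma Cn_meet p q t N z : is_partition p -> is_partition q ->
  Cn (pmeet p q) t N z = minn (Cn p t N z) (Cn q t N z).
Proof.
move=> pp qq; rewrite /Cn /Bn !count_map.
rewrite -cnt_min.
- apply: eq_count => i /=; rewrite /bv nth_pmeet.
  by apply/idP/idP; [move=> h1; apply/andP; split|case/andP]; lia.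
- by move=> i /= h; apply: le_trans h _; apply/ltW/bv_lt.
- by move=> i /= h; apply: le_trans h _; apply/ltW/bv_lt.
Qed.

Lemma count_split2 (T : eqType) (P Q : pred T) (s : seq T) :
  count P s = (count P [seq x <- s | Q x] + count P [seq x <- s | ~~ Q x])%N.
Proof. by elim: s => //= x s ->; case: (Q x) => /=; lia. Qed.

Lemma Cn_Dl p q t N z : is_partition p -> is_partition q ->
  (Cn p t N z + count (fun w => (z <= w)%R) (Dl q p t N) =
   Cn q t N z + count (fun w => (z <= w)%R) (Dl p q t N))%N.
Proof.
move=> pp qq; rewrite /Cn /Dl.
rewrite (count_split2 _ (fun w => w \in Bn q t N) (Bn p t N)).
rewrite (count_split2 _ (fun w => w \in Bn p t N) (Bn q t N)).
rewrite (permP (Dl_common_perm t N pp qq)) -!addnA; congr (_ + _)%N; apply: addnC.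
Qed.
Lemma uniq2 (s : seq int) a b : uniq s -> (forall w, w \in s <-> (w = a \/ w = b)) -> a <> b ->
  size s = 2%N.
Proof.
move=> us h ab.
have hp : perm_eq s [:: a; b].
  apply: uniq_perm => //=; first by rewrite inE andbT; apply/eqP.
  move=> w; rewrite !inE; apply/idP/idP => [/h [->|->]|/orP[/eqP->|/eqP->]]; rewrite ?eqxx ?orbT //.
  - by apply/h; left.
  - by apply/h; right.
by rewrite (perm_size hp).
Qed.

Lemma J2comp_Dl2 p q t N : is_partition p -> is_partition q -> p <> q ->
  (size p <= N)%N -> (size q <= N)%N ->
  ribbon p (pmeet p q) -> ribbon q (pmeet p q) ->
  skew_size p (pmeet p q) = skew_size q (pmeet p q) -> size (Dl p q t N) = 2%N.
Proof.
move=> pp qq pq sp sq rp rq ss.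
set v := pmeet p q in rp rq ss.
have vv : is_partition v by apply: pmeet_part.
have [x [y [mp yx]]] := ribbon_Move t pp vv (pmeet_sub_l p q) rp.
have [x' [y' [mq yx']]] := ribbon_Move t qq vv (pmeet_sub_r p q) rq.
have s1 := Move_sum pp vv mp; have s2 := Move_sum qq vv mq.
have k1 := skew_sumn vv (pmeet_sub_l p q); have k2 := skew_sumn vv (pmeet_sub_r p q).
have dxy : x - y = x' - y'.
  rewrite -s1 -s2 -k1 -k2 ss; rewrite !PoszD; ring.
have mp' := Move_sym mp; have mq' := Move_sym mq.
case: mp => bpx npy ev; case: mq => bqx nqy ev'.
case: mp' => bvy nvx ep; case: mq' => bvy' nvx' eq.
have xx' : x <> x'.
  move=> exx; apply: pq; apply: (@beta_part_eq p q t pp qq) => w.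
  have eyy : y = y' by move: dxy; rewrite exx; lia.
  by rewrite (ep w) (eq w) exx eyy.
apply: (@uniq2 _ x y'); rewrite ?Dl_uniq //.
- move=> w; rewrite (mem_Dl t w pp qq sp sq); split.
  + case=> /ep [[bw wy]|->]; last by left.
    move=> nq; right; apply: NNPP => wy'; apply: nq; apply/eq; left; done.
  + case=> ->.
    * split=> //; move/eq => [[]|] //.
    * split; last done.
      apply/ep; left; split => // yy; apply: xx'; move: dxy; rewrite yy; lia.
- by move=> e; apply: nvx; rewrite e.
Qed.

Definition J2comp p q := [/\ ribbon p (pmeet p q), ribbon q (pmeet p q) &
   skew_size p (pmeet p q) = skew_size q (pmeet p q)].

Lemma J2compC p q : J2comp p q -> J2comp q p.
Proof. by case; rewrite /J2comp pmeetC. Qed.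

Lemma Dl1_ribbon p v t N : is_partition p -> is_partition v -> psub v p ->
  (size p <= N)%N -> (size v <= N)%N -> size (Dl p v t N) = 1%N ->
  ribbon p v /\ skew_size p v = (sumn p - sumn v)%N.
Proof.
move=> pp vv sub sp sv h1.
have [x [y [_ _ mv]]] := Dl_one pp vv sp sv h1.
have s1 := Move_sum pp vv mv; have k1 := skew_sumn vv sub.
have yx : y < x.
  case: mv => bx ny _.
  have xy : x != y by apply/eqP => e; apply: ny; rewrite -e.
  rewrite lt_neqAle eq_sym xy /=.
  have : (sumn v <= sumn p)%N by rewrite -k1 leq_addl.
  lia.
by case: (Move_ribbon pp vv mv yx).
Qed.

Lemma arith (P1 Q1 V1 : nat) (bp bq bv : bool) (ka kc : nat) :
  (V1 + bv = minn (P1 + bp) (Q1 + bq))%N -> V1 = minn P1 Q1 -> (P1 + kc = Q1 + ka)%N ->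
  [/\ bp -> bq -> bv, bp -> ~~ bq -> ka = kc -> ~~ bv, bp -> ~~ bq -> (ka + 1 = kc)%N -> bv,
      ~~ bp -> bq -> (kc + 1 = ka)%N -> bv & ~~ bp -> bq -> kc = ka -> ~~ bv].
Proof.
case: bp; case: bq; case: bv => /= h1 h2 h3; split => //= *; lia.
Qed.

Lemma counts (a b c d : int) : b < d -> d < c -> c < a ->
  [/\ (nat_of_bool (a + 1 <= a)%R + nat_of_bool (a + 1 <= b)%R)%N = 0%N,
      (nat_of_bool (a + 1 <= c)%R + nat_of_bool (a + 1 <= d)%R)%N = 0%N,
      (nat_of_bool (b + 1 <= a)%R + nat_of_bool (b + 1 <= b)%R)%N = 1%N,
      (nat_of_bool (b + 1 <= c)%R + nat_of_bool (b + 1 <= d)%R)%N = 2%N &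
      [/\ (nat_of_bool (c + 1 <= a)%R + nat_of_bool (c + 1 <= b)%R)%N = 1%N,
      (nat_of_bool (c + 1 <= c)%R + nat_of_bool (c + 1 <= d)%R)%N = 0%N,
      (nat_of_bool (d + 1 <= a)%R + nat_of_bool (d + 1 <= b)%R)%N = 1%N &
      (nat_of_bool (d + 1 <= c)%R + nat_of_bool (d + 1 <= d)%R)%N = 1%N]].
Proof. move=> h1 h2 h3; split; [lia|lia|lia|lia|split; lia]. Qed.

Lemma core p q t N a b c d : is_partition p -> is_partition q ->
  (size p <= N)%N -> (size q <= N)%N ->
  perm_eq (Dl p q t N) [:: a; b] -> perm_eq (Dl q p t N) [:: c; d] ->
  b < d -> d < c -> c < a -> sumn p = sumn q -> J2comp p q.
Proof.
move=> pp qq sp sq hpq hqp bd dc ca spq.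
set v := pmeet p q.
have vv : is_partition v by apply: pmeet_part.
have sv : (size v <= N)%N.
  by rewrite /v /pmeet size_mkseq; apply: leq_trans (geq_minl _ _) sp.
have mDl : forall X Y w, (w \in Dl X Y t N) = (w \notin Bn Y t N) && (w \in Bn X t N).
  by move=> X Y w; rewrite /Dl mem_filter.
have ma := perm_mem hpq a; have mb := perm_mem hpq b.
have mc := perm_mem hqp c; have md := perm_mem hqp d.
rewrite !inE !eqxx ?orbT ?orTb !mDl in ma mb mc md.
case/andP: ma => aq ap; case/andP: mb => bq bp.
case/andP: mc => cp cq; case/andP: md => dp dq.
have F3 : forall z, (Cn p t N (z + 1) + (nat_of_bool (z + 1 <= c)%R + nat_of_bool (z + 1 <= d)%R) = Cn q t N (z + 1) + (nat_of_bool (z + 1 <= a)%R + nat_of_bool (z + 1 <= b)%R))%N.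
  move=> z; have := Cn_Dl t N (z + 1) pp qq.
  by rewrite (permP hpq) (permP hqp) /= !addn0.
have AR : forall w, let ka := (nat_of_bool (w + 1 <= a)%R + nat_of_bool (w + 1 <= b)%R)%N in
    let kc := (nat_of_bool (w + 1 <= c)%R + nat_of_bool (w + 1 <= d)%R)%N in
    let bp := w \in Bn p t N in let bq := w \in Bn q t N in let bv := w \in Bn v t N in
    [/\ bp -> bq -> bv, bp -> ~~ bq -> ka = kc -> ~~ bv, bp -> ~~ bq -> (ka + 1 = kc)%N -> bv,
      ~~ bp -> bq -> (kc + 1 = ka)%N -> bv & ~~ bp -> bq -> kc = ka -> ~~ bv].
  move=> w ka kc Bp Bq Bv; apply: (arith (V1 := Cn v t N (w + 1)) _ _ (F3 w)).
  - by rewrite /Bp /Bq /Bv -!Cn_step // /v Cn_meet.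
  - exact: Cn_meet.
have both : forall w, w \in Bn p t N -> w \in Bn q t N -> w \in Bn v t N.
  by move=> w hp hq; case: (AR w) => h _ _ _ _; apply: h.
have [c1 c2 c3 c4 [c5 c6 c7 c8]] := counts bd dc ca.
have va : (a \in Bn v t N) = false.
  by apply/negbTE; case: (AR a) => _ h _ _ _; apply: h => //; rewrite c1 c2.
have vb : (b \in Bn v t N) = true.
  by case: (AR b) => _ _ h _ _; apply: h => //; rewrite c3 c4.
have vc : (c \in Bn v t N) = true.
  by case: (AR c) => _ _ _ h _; apply: h => //; rewrite c5 c6.
have vd : (d \in Bn v t N) = false.
  by apply/negbTE; case: (AR d) => _ _ _ _ h; apply: h => //; rewrite c7 c8.
have Dpv : size (Dl p v t N) = 1%N.
  apply/eqP; rewrite -(uniq_size_uniq (s1 := [:: a])) //; first by rewrite Dl_uniq.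
  move=> w; rewrite inE mDl; apply/idP/idP => [/eqP ->|/andP[nv wp]]; first by rewrite va ap.
  case: (boolP (w \in Bn q t N)) => wq; first by move: nv; rewrite both.
  have : w \in Dl p q t N by rewrite mDl wq wp.
  rewrite (perm_mem hpq) !inE => /orP[//|/eqP e]; by move: nv; rewrite e vb.
have Dqv : size (Dl q v t N) = 1%N.
  apply/eqP; rewrite -(uniq_size_uniq (s1 := [:: d])) //; first by rewrite Dl_uniq.
  move=> w; rewrite inE mDl; apply/idP/idP => [/eqP ->|/andP[nv wq]]; first by rewrite vd dq.
  case: (boolP (w \in Bn p t N)) => wp; first by move: nv; rewrite both.
  have : w \in Dl q p t N by rewrite mDl wp wq.
  rewrite (perm_mem hqp) !inE => /orP[/eqP e|//]; by move: nv; rewrite e vc.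
have [r1 k1] := Dl1_ribbon pp vv (pmeet_sub_l p q) sp sv Dpv.
have [r2 k2] := Dl1_ribbon qq vv (pmeet_sub_r p q) sq sv Dqv.
by split => //; rewrite k1 k2 spq.
Qed.

Lemma size2 (s : seq int) : size s = 2%N -> s = [:: nth 0 s 0; nth 0 s 1].
Proof. by case: s => // x [|y []]. Qed.

Lemma Dl2_J2comp p q t N : is_partition p -> is_partition q ->
  (size p <= N)%N -> (size q <= N)%N -> size (Dl p q t N) = 2%N -> sumn p = sumn q ->
  J2comp p q.
Proof.
move=> pp qq sp sq h2 spq; have h2' := h2; rewrite (Dl_sym t N pp qq) in h2'.
have e1 := size2 h2; have e2 := size2 h2'.
set a := nth 0 (Dl p q t N) 0 in e1; set b := nth 0 (Dl p q t N) 1 in e1.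
set c := nth 0 (Dl q p t N) 0 in e2; set d := nth 0 (Dl q p t N) 1 in e2.
have u1 := Dl_uniq q t N pp; have u2 := Dl_uniq p t N qq.
rewrite e1 /= inE andbT in u1; rewrite e2 /= inE andbT in u2.
have sum := Dl_sum t pp qq sp sq.
rewrite spq subrr e1 e2 !big_cons !big_nil in sum.
have dist : forall x y, x \in Dl p q t N -> y \in Dl q p t N -> x != y.
  move=> x y hx hy; apply/eqP => exy.
  have [_ nq] := (mem_Dl t x pp qq sp sq).1 hx.
  have [bq _] := (mem_Dl t y qq pp sq sp).1 hy.
  by apply: nq; rewrite exy.
have ac := dist a c; have ad := dist a d; have bc := dist b c; have bd := dist b d.
rewrite e1 e2 !inE !eqxx ?orbT in ac ad bc bd.
have := ac erefl erefl; have := ad erefl erefl; have := bc erefl erefl; have := bd erefl erefl.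
move=> {ac ad bc bd} bd bc ad ac.
have pab : perm_eq [:: a; b] [:: b; a] by rewrite (perm_catC [:: a] [:: b]).
have pcd : perm_eq [:: c; d] [:: d; c] by rewrite (perm_catC [:: c] [:: d]).
have hpq : perm_eq (Dl p q t N) [:: a; b] by rewrite e1.
have hqp : perm_eq (Dl q p t N) [:: c; d] by rewrite e2.
have hpq' : perm_eq (Dl p q t N) [:: b; a] by rewrite e1.
have hqp' : perm_eq (Dl q p t N) [:: d; c] by rewrite e2.
have K : forall x y z w, perm_eq (Dl p q t N) [:: x; y] -> perm_eq (Dl q p t N) [:: z; w] ->
    y < x -> w < z -> x + y = z + w -> x != z -> J2comp p q.
  move=> x y z w h1 h3 yx wz s xz.
  case: (ltgtP z x) => zx.
  - apply: (core pp qq sp sq h1 h3) => //; lia.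
  - apply: J2compC; apply: (core qq pp sq sp h3 h1) => //; lia.
  - by move: xz; rewrite zx eqxx.
case: (ltgtP a b) => ab; last by move: u1; rewrite ab eqxx.
- case: (ltgtP c d) => cd; last by move: u2; rewrite cd eqxx.
  + apply: (K b a d c hpq' hqp') => //; lia.
  + apply: (K b a c d hpq' hqp) => //; lia.
- case: (ltgtP c d) => cd; last by move: u2; rewrite cd eqxx.
  + apply: (K a b d c hpq hqp') => //; lia.
  + apply: (K a b c d hpq hqp) => //; lia.
Qed.
Lemma sum0_each (l : nat) (P : pred 'I_l) (f : 'I_l -> nat) :
  (\sum_(b | P b) f b)%N = 0%N -> forall b, P b -> f b = 0%N.
Proof.
move=> /eqP; rewrite sum_nat_eq0 => /forallP h b pb.
by have := h b; rewrite pb /= => /eqP.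
Qed.

Lemma sum2 (l : nat) (f : 'I_l -> nat) : (\sum_b f b)%N = 2%N ->
  (exists d, f d = 2%N /\ forall b, b <> d -> f b = 0%N) \/
  (exists d d', [/\ d <> d', f d = 1%N, f d' = 1%N & forall b, b <> d -> b <> d' -> f b = 0%N]).
Proof.
move=> h.
have [d hd] : exists d, (0 < f d)%N.
  apply: NNPP => nex.
  have : (\sum_b f b)%N = 0%N.
    rewrite big1 // => b _; apply/eqP; rewrite -leqn0 leqNgt; apply/negP => hb; apply: nex; by exists b.
  by rewrite h.
rewrite (bigD1 d) //= in h.
move: h; set S := bigop _ _ _; move=> h.
have [e2|e1] : f d = 2%N \/ f d = 1%N by lia.
- left; exists d; split => // b bd.
  have h0 : S = 0%N by lia.
  by apply: (sum0_each h0); apply/eqP.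
- right.
  have h1 : S = 1%N by lia.
  have [d' [d'd hd']] : exists d', d' != d /\ (0 < f d')%N.
    apply: NNPP => nex.
    have : S = 0%N.
      rewrite /S big1 // => b bd; apply/eqP; rewrite -leqn0 leqNgt; apply/negP => hb; apply: nex; by exists b.
    by rewrite h1.
  rewrite /S (bigD1 d') //= in h1.
  move: h1; set S' := bigop _ _ _; move=> h1.
  have e1' : f d' = 1%N by lia.
  have h0 : S' = 0%N by lia.
  exists d, d'; split => //.
  + by move=> e; move: d'd; rewrite e eqxx.
  + move=> b bd bd'; apply: (sum0_each h0); apply/andP; split; apply/eqP => //.
Qed.

Lemma Bset_Bn s la : Bset s la = Bn la s (sumn la).
Proof.
rewrite /Bset /Bn -[1%N]addn0 iotaDl -map_comp; apply: eq_map => j /=.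
by rewrite /bv add1n.
Qed.

Lemma Dl_self p t N : Dl p p t N = [::].
Proof.
rewrite /Dl (@eq_in_filter _ _ pred0) ?filter_pred0 // => w ->; done.
Qed.

Lemma corr_fwd n l (sl : 'I_l -> int) bla la b x : corr n sl bla la ->
  beta (bla b) (sl b) x ->
  exists i, phi n l (bv la (\sum_(b' < l) sl b') i) = x /\
            dpart n l (bv la (\sum_(b' < l) sl b') i) = (nat_of_ord b).+1%:Z.
Proof. by move=> h bx; have := (h x b).1 bx. Qed.

Lemma corr_bwd n l (sl : 'I_l -> int) bla la b x i : corr n sl bla la ->
  phi n l (bv la (\sum_(b' < l) sl b') i) = x ->
  dpart n l (bv la (\sum_(b' < l) sl b') i) = (nat_of_ord b).+1%:Z ->
  beta (bla b) (sl b) x.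
Proof. by move=> h e1 e2; apply: (h x b).2; exists i. Qed.

Lemma sum_count_dpart n l (L : seq int) : (0 < n)%N -> (0 < l)%N ->
  (\sum_(b < l) count (fun k => dpart n l k == (nat_of_ord b).+1%:Z) L)%N = size L.
Proof.
move=> n0 l0; elim: L => [|k L IH]; first by rewrite big1.
rewrite /= big_split /= IH.
have [b0 e] := dpart_range n l k n0 l0.
rewrite (bigD1 b0) //=; move: (dpart n l k) e => D ->; rewrite eqxx big1 ?addn0 // => b bb0.
apply/eqP; rewrite eqb0; apply/eqP => h; move/eqP: bb0; apply; apply: val_inj => /=.
by move: h; lia.
Qed.

Lemma decomp n l (sl : 'I_l -> int) (bla bmu : {ffun 'I_l -> seq nat}) la mu r :
  (0 < n)%N -> (0 < l)%N ->
  (forall b, is_partition (bla b)) -> (forall b, is_partition (bmu b)) ->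
  is_partition la -> is_partition mu -> corr n sl bla la -> corr n sl bmu mu ->
  (size la <= r)%N -> (size mu <= r)%N ->
  size (Dl la mu (\sum_(b < l) sl b) r) =
  (\sum_(b < l) size (Dl (bla b) (bmu b) (sl b) (maxn (size (bla b)) (size (bmu b)))))%N.
Proof.
move=> n0 l0 pla pmu pl pm cla cmu sl0 sm0.
set s := \sum_(b < l) sl b.
set L := Dl la mu s r.
rewrite -(sum_count_dpart L n0 l0); apply: eq_bigr => b _.
set N := maxn _ _.
have s1 : (size (bla b) <= N)%N by apply: leq_maxl.
have s2 : (size (bmu b) <= N)%N by apply: leq_maxr.
rewrite -size_filter.
have uL : uniq L by apply: Dl_uniq.
set F := [seq k <- L | dpart n l k == (nat_of_ord b).+1%:Z].
have uF : uniq (map (phi n l) F).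
  rewrite map_inj_in_uniq; first exact: filter_uniq.
  move=> k k'.
  rewrite !mem_filter => /andP[/eqP d1 _] /andP[/eqP d2 _] e.
  by apply: (psi_inj n l _ _ n0 l0 e); rewrite d1 d2.
rewrite -(size_map (phi n l) F).
suff H : Dl (bla b) (bmu b) (sl b) N =i [seq phi n l i | i <- F].
  by have := uniq_size_uniq (Dl_uniq (bmu b) (sl b) N (pla b)) H; rewrite uF => /esym/eqP.
move=> x; apply/idP/idP; rewrite (mem_Dl (sl b) x (pla b) (pmu b) s1 s2).
- case=> bx nbx; have [i [e1 e2]] := corr_fwd cla bx.
  apply/mapP; exists (bv la s i) => //.
  rewrite mem_filter e2 eqxx /=; apply/(mem_Dl s _ pl pm sl0 sm0); split; first by exists i.
  case=> i' ei'; apply: nbx; apply: (corr_bwd (i:=i') cmu); by rewrite -ei'.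
- case/mapP=> k; rewrite mem_filter => /andP[/eqP dk kL] ->.
  have [[i ei] nm] := (mem_Dl s k pl pm sl0 sm0).1 kL.
  split; first by apply: (corr_bwd (i:=i) cla); rewrite -ei.
  move=> bm; have [i' [e1 e2]] := corr_fwd cmu bm.
  apply: nm; exists i'; apply/esym; apply: (psi_inj n l _ _ n0 l0 e1); by rewrite e2 dk.
Qed.
Lemma J1_of l (bla bmu : {ffun 'I_l -> seq nat}) (d d' : 'I_l) t t' x y x' y' :
  d <> d' -> (forall b, is_partition (bla b)) -> (forall b, is_partition (bmu b)) ->
  Move (bla d) (bmu d) t x y -> y < x ->
  Move (bla d') (bmu d') t' x' y' -> x' < y' -> x - y = y' - x' ->
  (forall b, b <> d -> b <> d' -> bla b = bmu b) -> J1 bla bmu.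
Proof.
move=> dd' pla pmu mv yx mv' xy' ex oth.
have [sub1 r1 k1] := Move_ribbon (pla d) (pmu d) mv yx.
have [sub2 r2 k2] := Move_ribbon (pmu d') (pla d') (Move_sym mv') xy'.
have e1 := Move_sum (pla d) (pmu d) mv.
have e2 := Move_sum (pla d') (pmu d') mv'.
split.
- move=> e; move: e1; rewrite e subrr; lia.
- exists d, d'; split => //; split => //.
  rewrite k1 k2; move: e1 e2 ex; lia.
Qed.

Unset Implicit Arguments.

Theorem mainTheorem7 (n l m : nat) (sl : 'I_l -> int)
    (bla bmu : {ffun 'I_l -> seq nat}) (la mu : seq nat) (r : nat) :
  (0 < n)%N -> (0 < l)%N -> (0 < m)%N ->
  is_multipartition m bla -> is_multipartition m bmu ->
  is_partition la -> is_partition mu ->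
  corr n sl bla la -> corr n sl bmu mu ->
  sumn la = r -> sumn mu = r ->
  (J1 bla bmu \/ J2 bla bmu) <->
  (size (undup [seq x <- Bset (\sum_(b < l) sl b) la
                 | x \in Bset (\sum_(b < l) sl b) mu]))%:Z = r%:Z - 2.
Proof.
move=> n0 l0 m0 [pla sla] [pmu smu] pl pm cla cmu hr1 hr2.
set s := \sum_(b < l) sl b.
have sl0 : (size la <= r)%N by rewrite -hr1; apply: part_size.
have sm0 : (size mu <= r)%N by rewrite -hr2; apply: part_size.
rewrite !Bset_Bn hr1 hr2 undup_id; last by rewrite filter_uniq // Bn_uniq.
have hsz := size_Dl la mu s r.
have hle : (size [seq w <- Bn la s r | w \in Bn mu s r] <= r)%N.
  by rewrite size_filter (leq_trans (count_size _ _)) // size_map size_iota.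
rewrite (decomp n0 l0 pla pmu pl pm cla cmu sl0 sm0) in hsz.
set f := fun b : 'I_l => size (Dl (bla b) (bmu b) (sl b) (maxn (size (bla b)) (size (bmu b)))).
have s1 : forall b, (size (bla b) <= maxn (size (bla b)) (size (bmu b)))%N by move=> b; apply: leq_maxl.
have s2 : forall b, (size (bmu b) <= maxn (size (bla b)) (size (bmu b)))%N by move=> b; apply: leq_maxr.
have hsz' : (\sum_(b < l) f b)%N = (r - size [seq w <- Bn la s r | w \in Bn mu s r])%N by [].
suff : (J1 bla bmu \/ J2 bla bmu) <-> (\sum_(b < l) f b)%N = 2%N.
  move=> ->; rewrite hsz'; split; lia.
have f0 : forall b, bla b = bmu b -> f b = 0%N by move=> b e; rewrite /f e Dl_self.
split.
- case=> [[ne [d [d' [dd' sub1 sub2 oth [r1 r2 sk]]]]]|[ne [d [oth r1 r2 sk]]]].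
  + have fd : f d = 1%N.
      have [x [y [mv _]]] := ribbon_Move (sl d) (pla d) (pmu d) sub1 r1.
      by have [e _] := Move_Dl (pla d) (pmu d) (s1 d) (s2 d) mv; rewrite /f e.
    have fd' : f d' = 1%N.
      have [x [y [mv _]]] := ribbon_Move (sl d') (pmu d') (pla d') sub2 r2.
      have [e _] := Move_Dl (pmu d') (pla d') (s2 d') (s1 d') mv.
      by rewrite /f (Dl_sym _ _ (pla d') (pmu d')) e.
    rewrite (bigD1 d) //= (bigD1 d') /=; last by apply/eqP => e; apply: dd'.
    rewrite big1 ?fd ?fd' // => b /andP[/eqP bd /eqP bd']; apply: f0; exact: oth.
  + have nd : bla d <> bmu d.
      move=> e; apply: ne; apply/ffunP => b; case: (eqVneq b d) => [->|/eqP bd] //; exact: oth.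
    have fd : f d = 2%N by apply: (J2comp_Dl2 (sl d) (pla d) (pmu d) nd (s1 d) (s2 d) r1 r2 sk).
    rewrite (bigD1 d) //= big1 ?fd // => b /eqP bd; apply: f0; exact: oth.
- case/sum2 => [[d [fd oth]]|[d [d' [dd' fd fd' oth]]]].
  + have eq : forall b, b <> d -> bla b = bmu b.
      by move=> b bd; apply: (Dl_nil (pla b) (pmu b) (s1 b) (s2 b)); apply: oth.
    have ss : sumn (bla d) = sumn (bmu d).
      have := sla; rewrite -smu (bigD1 d) //= [X in (_ = X)%N](bigD1 d) //=.
      rewrite [X in (_ + X = _)%N](eq_bigr (fun b => sumn (bmu b))); first by move=> h; apply/eqP; rewrite -(eqn_add2r (\sum_(i < l | i != d) sumn (bmu i))); apply/eqP; exact: h.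
      by move=> b /eqP bd; rewrite eq.
    have [r1 r2 sk] := Dl2_J2comp (pla d) (pmu d) (s1 d) (s2 d) fd ss.
    right; split; last by exists d; split.
    by move=> e; move: fd; rewrite /f e Dl_self.
  + have eq : forall b, b <> d -> b <> d' -> bla b = bmu b.
      by move=> b bd bd'; apply: (Dl_nil (pla b) (pmu b) (s1 b) (s2 b)); apply: oth.
    have [x [y [_ _ mv]]] := Dl_one (pla d) (pmu d) (s1 d) (s2 d) fd.
    have [x' [y' [_ _ mv']]] := Dl_one (pla d') (pmu d') (s1 d') (s2 d') fd'.
    have e1 := Move_sum (pla d) (pmu d) mv; have e2 := Move_sum (pla d') (pmu d') mv'.
    have ss : (sumn (bla d) + sumn (bla d') = sumn (bmu d) + sumn (bmu d'))%N.
      have dd : d' != d by apply/eqP => e; apply: dd'.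
      have := sla; rewrite -smu (bigD1 d) //= [X in (_ = X)%N](bigD1 d) //=.
      rewrite (bigD1 d') //= [X in (_ = _ + X)%N](bigD1 d') //=.
      rewrite [X in (_ + (_ + X) = _)%N](eq_bigr (fun b => sumn (bmu b))); first by move=> h; apply/eqP; rewrite -(eqn_add2r (\sum_(i < l | (i != d) && (i != d')) sumn (bmu i))) -!addnA; apply/eqP; exact: h.
      by move=> b /andP[/eqP bd /eqP bd']; rewrite eq.
    have xy : x != y by case: mv => bx ny _; apply/eqP => e; apply: ny; rewrite -e.
    left; case: (ltgtP x y) => hxy; last by move: xy; rewrite hxy eqxx.
    * apply: (J1_of (d := d') (d' := d) _ pla pmu mv' _ mv hxy) => //.
      - by move=> e; apply: dd'.
      - move: e1 e2 ss hxy; lia.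
      - move: e1 e2 ss hxy; lia.
      - by move=> b bd' bd; apply: eq.
    * apply: (J1_of dd' pla pmu mv hxy mv') => //.
      - move: e1 e2 ss hxy; lia.
      - move: e1 e2 ss hxy; lia.
Qed.
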